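(* Let $d,k$ be positive integers and $r$ a positive real number. Let $L_d(r)=\{v\in\mathbb{Z}^d:\|v\|_2\le r,\ v_i>0 \text{ for } 1\le i\le d\}$ and $L_{d,k}(r)=\{v\in\mathbb{Z}^d:\|v\|_2\le r,\ v_i>0 \text{ and } k\nmid v_i \text{ for }1\le i\le d\}$. Then $k^d|L_{d,k}(r)|\ge (k-1)^d|L_d(r)|$.
   Context: $\|\cdot\|_2$ is the Euclidean norm. *)

(* Defs.v *)
From Stdlib Require Import Reals ZArith List Lra Lia.
Open Scope R_scope.

Definition sqnorm (v : list Z) : R :=
  fold_right (fun x acc => IZR x * IZR x + acc) 0 v.

Definition norm2 (v : list Z) : R := sqrt (sqnorm v).

Definition L (d : nat) (r : R) (v : list Z) : Prop :=
  length v = d /\ norm2 v <= r /\ Forall (fun x => (0 < x)%Z) v.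

Definition Lk (d k : nat) (r : R) (v : list Z) : Prop :=
  length v = d /\ norm2 v <= r /\
  Forall (fun x => (0 < x)%Z /\ ~ (Z.of_nat k | x)%Z) v.

Definition has_card (P : list Z -> Prop) (n : nat) : Prop :=
  exists l : list (list Z), NoDup l /\ (forall v, In v l <-> P v) /\ length l = n.

(* Main.v *)
Require Import Defs.
From Stdlib Require Import Reals ZArith List Lia Lra.
Open Scope R_scope.

Lemma NoDup_prod {A B} (l : list A) (l' : list B) :
  NoDup l -> NoDup l' -> NoDup (list_prod l l').
Proof.
  induction l as [|a l IH]; simpl; intros Hl Hl'.
  - constructor.
  - inversion Hl; subst. apply NoDup_app.
    + apply NoDup_map_NoDup_ForallPairs; auto.
      intros x y _ _ H; congruence.
    + auto.
    + intros [x y] Q1 Q2. apply in_map_iff in Q1. destruct Q1 as [z [Hz _]].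
      inversion Hz; subst. apply in_prod_iff in Q2. tauto.
Qed.

Definition zrange (m : nat) : list Z := map Z.of_nat (seq 0 m).

Fixpoint cube (m d : nat) : list (list Z) :=
  match d with
  | O => nil :: nil
  | S d => map (fun p => fst p :: snd p) (list_prod (zrange m) (cube m d))
  end.

Lemma zrange_spec m x : In x (zrange m) <-> (0 <= x < Z.of_nat m)%Z.
Proof.
  unfold zrange. rewrite in_map_iff. split.
  - intros [y [<- Hy]]. apply in_seq in Hy. lia.
  - intros H. exists (Z.to_nat x). rewrite in_seq. split; lia.
Qed.

Lemma zrange_nodup m : NoDup (zrange m).
Proof.
  unfold zrange. apply NoDup_map_NoDup_ForallPairs. intros x y _ _ H; lia.
  apply seq_NoDup.
Qed.

Lemma cube_len m d : length (cube m d) = (m ^ d)%nat.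
Proof.
  induction d; simpl; auto. rewrite length_map, length_prod, IHd.
  unfold zrange; rewrite length_map, length_seq; auto.
Qed.

Lemma cube_nodup m d : NoDup (cube m d).
Proof.
  induction d; simpl.
  - constructor; auto. constructor.
  - apply NoDup_map_NoDup_ForallPairs.
    + intros [a b] [c e] _ _ H; simpl in H; inversion H; subst; auto.
    + apply NoDup_prod; auto using zrange_nodup.
Qed.

Lemma cube_spec m d c : In c (cube m d) <->
  length c = d /\ Forall (fun x => (0 <= x < Z.of_nat m)%Z) c.
Proof.
  revert c; induction d; intros c; simpl.
  - split.
    + intros [<-|[]]. split; auto.
    + intros [H _]. destruct c; simpl in *; auto; discriminate.
  - rewrite in_map_iff. split.
    + intros [[a b] [<- H]]. apply in_prod_iff in H. destruct H as [Ha Hb].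
      apply IHd in Hb. apply zrange_spec in Ha. simpl. destruct Hb. split; auto.
    + intros [Hl HF]. destruct c as [|a b]; simpl in Hl; [discriminate|].
      inversion HF; subst. exists (a, b); split; auto. apply in_prod.
      apply zrange_spec; auto. apply IHd; split; auto.
Qed.

Section G.
Variable K : Z.

Definition g (x c : Z) : Z * Z :=
  if (x mod K =? 0)%Z then (x - K + 1 + c, K - 1)%Z else (x, c).

Lemma g_props x c : (0 < x)%Z -> (0 <= c < K - 1)%Z ->
  (0 < fst (g x c) <= x)%Z /\ ~ (K | fst (g x c))%Z /\ (0 <= snd (g x c) < K)%Z.
Proof.
  intros Hx Hc. unfold g. destruct (Z.eqb_spec (x mod K) 0) as [E|E]; simpl.
  - apply Z.mod_divide in E; [|lia]. destruct E as [q ->].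
    assert (1 <= q)%Z by nia.
    split; [nia|]. split; [|lia].
    intros [p Hp]. assert (Ht : ((p - q + 1) * K = 1 + c)%Z) by lia.
    destruct (Z.le_gt_cases (p - q + 1) 0); nia.
  - split; [lia|]. split; [|lia]. intros Hd. apply E. apply Z.mod_divide; auto; lia.
Qed.

Lemma g_inj x c x' c' : (0 <= c < K - 1)%Z -> (0 <= c' < K - 1)%Z ->
  g x c = g x' c' -> x = x' /\ c = c'.
Proof.
  intros Hc Hc'. unfold g.
  destruct (Z.eqb_spec (x mod K) 0) as [E|E];
  destruct (Z.eqb_spec (x' mod K) 0) as [E'|E']; intros H; inversion H; subst;
    try lia; auto.
  apply Z.mod_divide in E; [|lia]. apply Z.mod_divide in E'; [|lia].
  destruct E as [q ->]. destruct E' as [q' ->].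
  assert (q = q') by nia. subst. lia.
Qed.

Fixpoint G (v cs : list Z) : list Z * list Z :=
  match v, cs with
  | x :: v, c :: cs => let (y, e) := g x c in let (w, es) := G v cs in (y :: w, e :: es)
  | _, _ => (nil, nil)
  end.

Lemma G_inj v cs v' cs' :
  length v = length cs -> length v' = length cs' -> length v = length v' ->
  Forall (fun x => (0 <= x < K - 1)%Z) cs ->
  Forall (fun x => (0 <= x < K - 1)%Z) cs' ->
  G v cs = G v' cs' -> v = v' /\ cs = cs'.
Proof.
  revert cs v' cs'; induction v as [|x v IH]; intros cs v' cs' H1 H2 H3 F F' HG.
  - destruct v'; [|discriminate]. destruct cs; [|discriminate].
    destruct cs'; [|discriminate]. auto.
  - destruct cs as [|c cs]; [discriminate|]. destruct v' as [|x' v']; [discriminate|].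
    destruct cs' as [|c' cs']; [discriminate|]. simpl in *.
    inversion F; inversion F'; subst.
    destruct (g x c) as [y e] eqn:Eg. destruct (G v cs) as [w es] eqn:EG.
    destruct (g x' c') as [y' e'] eqn:Eg'. destruct (G v' cs') as [w' es'] eqn:EG'.
    inversion HG; subst.
    destruct (g_inj x c x' c'); auto; try congruence. subst.
    destruct (IH cs v' cs'); auto; try lia; try congruence. subst; auto.
Qed.

Lemma G_props v cs :
  length v = length cs -> Forall (fun x => (0 < x)%Z) v ->
  Forall (fun x => (0 <= x < K - 1)%Z) cs ->
  length (fst (G v cs)) = length v /\
  Forall (fun x => (0 < x)%Z /\ ~ (K | x)%Z) (fst (G v cs)) /\
  sqnorm (fst (G v cs)) <= sqnorm v /\
  length (snd (G v cs)) = length v /\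
  Forall (fun x => (0 <= x < K)%Z) (snd (G v cs)).
Proof.
  revert cs; induction v as [|x v IH]; intros cs Hl Fv Fc.
  - simpl. split; auto. split; auto. split; [lra|]. auto.
  - destruct cs as [|c cs]; [discriminate|]. simpl in *.
    inversion Fv; inversion Fc; subst.
    destruct (g_props x c) as [[A1 A2] [B C]]; auto.
    destruct (g x c) as [y e] eqn:Eg. destruct (G v cs) as [w es] eqn:EG.
    destruct (IH cs) as [I1 [I2 [I3 [I4 I5]]]]; auto. rewrite EG in *. simpl in *.
    split; [lia|]. split; [constructor; auto|]. split.
    + apply Rplus_le_compat; auto.
      assert (0 < IZR y)%R by (apply IZR_lt; auto).
      assert (IZR y <= IZR x)%R by (apply IZR_le; auto).
      nra.
    + split; [lia|]. constructor; auto.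
Qed.
End G.

Lemma sqnorm_nonneg v : 0 <= sqnorm v.
Proof. induction v; simpl; [lra|]. nra. Qed.

Theorem lemma2p5 (d k : nat) (r : R) (n nk : nat) :
  (0 < d)%nat -> (0 < k)%nat -> 0 < r ->
  has_card (L d r) n -> has_card (Lk d k r) nk ->
  ((k - 1) ^ d * n <= k ^ d * nk)%nat.
Proof.
  intros Hd Hk Hr [l [Nl [Il Ll]]] [lk [Nlk [Ilk Llk]]].
  set (K := Z.of_nat k).
  set (dom := list_prod l (cube (k - 1) d)).
  set (F := fun p : list Z * list Z => G K (fst p) (snd p)).
  set (tgt := list_prod lk (cube k d)).
  assert (Hdl : length dom = ((k - 1) ^ d * n)%nat).
  { unfold dom. rewrite length_prod, cube_len, Ll. lia. }
  assert (Htl : length tgt = (k ^ d * nk)%nat).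
  { unfold tgt. rewrite length_prod, cube_len, Llk. lia. }
  rewrite <- Hdl, <- Htl, <- (length_map F dom).
  apply NoDup_incl_length.
  - apply NoDup_map_NoDup_ForallPairs.
    + intros [v cs] [v' cs'] H1 H2 HF. unfold dom in *.
      apply in_prod_iff in H1, H2. destruct H1 as [H1 H1']. destruct H2 as [H2 H2'].
      apply Il in H1, H2. apply cube_spec in H1', H2'.
      destruct H1 as [La _], H2 as [Lb _], H1' as [Lc Fc], H2' as [Ld Fd].
      unfold F in HF; simpl in HF.
      destruct (G_inj K v cs v' cs'); try congruence;
        try (eapply Forall_impl; [|eassumption]; intros x Hx; simpl in Hx; unfold K; lia).
    + apply NoDup_prod; auto using cube_nodup.
  - intros p Hp. apply in_map_iff in Hp. destruct Hp as [[v cs] [<- Hin]].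
    unfold dom in Hin. apply in_prod_iff in Hin. destruct Hin as [H1 H2].
    apply Il in H1. apply cube_spec in H2. destruct H1 as [La [Nv Fv]]. destruct H2 as [Lc Fc].
    destruct (G_props K v cs) as [P1 [P2 [P3 [P4 P5]]]]; try congruence.
    { eapply Forall_impl; [|exact Fc]. intros x Hx; simpl in Hx. unfold K. lia. }
    unfold F, tgt. simpl. destruct (G K v cs) as [w es]. simpl in *.
    apply in_prod.
    + apply Ilk. split; [congruence|]. split; auto.
      unfold norm2 in *. eapply Rle_trans; [|exact Nv]. apply sqrt_le_1_alt. auto.
    + apply cube_spec. split; [congruence|]. auto.
Qed.
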